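(* Let $n,m\ge1$, $r>0$, and let $\mathbf b_1,\dots,\mathbf b_m\in[0,\infty)^n$ be nonzero vectors with nonnegative entries. Consider the system, in the unknown $\mathbf u\in\mathbb{R}^n$, $$\frac{r}{m}\sum_{j=1}^m\frac{\mathbf b_j}{\mathbf u\cdot\mathbf b_j}-\mathbf u=0 .$$ Then this system has at most one solution $\mathbf u$ with $\mathbf u\cdot\mathbf b_j>0$ for all $j=1,\dots,m$; and if $\mathbf u$ is such a solution, then $\mathbf u\cdot\mathbf u=r$ and $\widehat l(\mathbf u)=\prod_{j=1}^m(\mathbf u\cdot\mathbf b_j)$ equals the global maximum of $\widehat l$ on the sphere $\{\mathbf u\in\mathbb{R}^n:\sum_{i=1}^n u_i^2=r\}$.
   Context: The system is the Lagrange multiplier condition (with the multiplier eliminated) for maximizing $\widehat l(\mathbf u)=\prod_j(\mathbf u\cdot\mathbf b_j)$ on the sphere $\sum_iu_i^2=r$; in the application $b_{ij}=v_i\varphi_i(x_j)$ for nonnegative window functions $\varphi_i$ and observations $x_j$. *)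

(* Defs.v *)
From mathcomp Require Import all_boot all_order all_algebra.
Set Implicit Arguments. Unset Strict Implicit. Unset Printing Implicit Defensive.
Import Order.TTheory GRing.Theory Num.Theory.
Local Open Scope ring_scope.

Definition dotv (R : realFieldType) (n : nat) (u v : 'I_n -> R) : R :=
  \sum_(i < n) u i * v i.

Definition lhat (R : realFieldType) (n m : nat) (b : 'I_m -> 'I_n -> R)
  (u : 'I_n -> R) : R := \prod_(j < m) dotv u (b j).

Definition solves_system (R : realFieldType) (n m : nat) (r : R)
  (b : 'I_m -> 'I_n -> R) (u : 'I_n -> R) : Prop :=
  forall i : 'I_n, r / m%:R * (\sum_(j < m) b j i / dotv u (b j)) - u i = 0.

(* Main.v *)
Require Import Defs.
From mathcomp Require Import all_boot all_order all_algebra.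
From Stdlib Require Import FunctionalExtensionality.
From mathcomp Require Import ring lra.
Import Order.TTheory GRing.Theory Num.Theory.
Local Open Scope ring_scope.

Lemma AGM (R : rcfType) m (E : 'I_m -> R) : (forall i, 0 <= E i) ->
  \prod_(i < m) E i <= ((\sum_(i < m) E i) / m%:R) ^+ m.
Proof.
move=> H; have := leif_AGM (A := 'I_m) (E := E) (fun i _ => H i).
by rewrite card_ord => /leifP; case: ifP => [_ /eqP ->|_ /ltW].
Qed.
Arguments AGM {R m E}.

Lemma dot_sol (R : rcfType) n m (r : R) (b : 'I_m -> 'I_n -> R) u w :
  solves_system r b u ->
  dotv w u = r / m%:R * \sum_(j < m) dotv w (b j) / dotv u (b j).
Proof.
move=> H; rewrite /dotv.
have -> : \sum_(i < n) w i * u i =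
   \sum_(i < n) w i * (r / m%:R * (\sum_(j < m) b j i / dotv u (b j))).
  by apply: eq_bigr => i _; have /eqP := H i; rewrite subr_eq0 => /eqP ->.
rewrite mulr_sumr.
transitivity (\sum_(i < n) \sum_(j < m) r / m%:R * (w i * b j i / dotv u (b j))).
  by apply: eq_bigr => i _; rewrite !mulr_sumr; apply: eq_bigr => j _; rewrite /dotv; ring.
rewrite exchange_big; apply: eq_bigr => j _.
by rewrite mulr_suml mulr_sumr; apply: eq_bigr => i _; rewrite /dotv; ring.
Qed.
Arguments dot_sol {R n m r b u} w.

Theorem theorem3 (R : rcfType) (n m : nat) (r : R)
  (b : 'I_m -> 'I_n -> R) :
  (1 <= n)%N -> (1 <= m)%N -> 0 < r ->
  (forall j i, 0 <= b j i) ->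
  (forall j, exists i, b j i != 0) ->
  (forall u v : 'I_n -> R,
     solves_system r b u -> (forall j, 0 < dotv u (b j)) ->
     solves_system r b v -> (forall j, 0 < dotv v (b j)) ->
     u = v) /\
  (forall u : 'I_n -> R,
     solves_system r b u -> (forall j, 0 < dotv u (b j)) ->
     dotv u u = r /\
     (forall v : 'I_n -> R, \sum_(i < n) v i ^+ 2 = r -> lhat b v <= lhat b u)).
Proof.
move=> n1 m1 r0 b0 _.
have m0 : 0 < m%:R :> R by rewrite ltr0n.
have c0 : 0 <= r / m%:R by rewrite divr_ge0 // ltW.
split.
  move=> u v Hu pu Hv pv.
  pose d := fun i => u i - v i.
  have Ed : forall j, dotv d (b j) = dotv u (b j) - dotv v (b j).
    by move=> j; rewrite /dotv -sumrB; apply: eq_bigr => i _; rewrite /d; ring.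
  have E : dotv d d = r / m%:R * \sum_(j < m)
      (- ((dotv u (b j) - dotv v (b j)) ^+ 2 / (dotv u (b j) * dotv v (b j)))).
    have -> : dotv d d = dotv d u - dotv d v.
      by rewrite /dotv -sumrB; apply: eq_bigr => i _; rewrite /d; ring.
    rewrite (dot_sol d Hu) (dot_sol d Hv) -mulrBr -sumrB; congr (_ * _).
    apply: eq_bigr => j _; rewrite Ed.
    have := pu j; have := pv j; rewrite !lt0r => /andP[a1 _] /andP[a2 _].
    by field; rewrite a1 a2.
  have le0 : dotv d d <= 0.
    rewrite E; apply: mulr_ge0_le0 => //; apply: sumr_le0 => j _.
    rewrite oppr_le0; apply: divr_ge0; first exact: sqr_ge0.
    by apply: mulr_ge0; apply: ltW.
  have ge0 : 0 <= dotv d d by apply: sumr_ge0 => i _; rewrite -expr2 sqr_ge0.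
  have /eqP := le_anti (andb_true_intro (conj le0 ge0)).
  rewrite /dotv psumr_eq0; last by move=> i _; rewrite -expr2 sqr_ge0.
  move=> /allP H; apply: functional_extensionality => i.
  have /H /= : i \in index_enum 'I_n by rewrite mem_index_enum.
  by rewrite mulf_eq0 orbb /d subr_eq0 => /eqP.
move=> u Hu pu.
have uu : dotv u u = r.
  rewrite (dot_sol u Hu).
  under eq_bigr do rewrite divff ?gt_eqF //.
  by rewrite sumr_const card_ord divfK // gt_eqF.
split => // v Hv.
pose w := fun i => `|v i|.
have h1 : lhat b v <= \prod_(j < m) dotv w (b j).
  apply: le_trans (ler_norm _) _; rewrite /lhat normr_prod.
  apply: ler_prod => j _; rewrite normr_ge0 /=.
  apply: le_trans (ler_norm_sum _ _ _) _.
  by apply: ler_sum => i _; rewrite normrM (ger0_norm (b0 j i)).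
pose x := fun j => dotv w (b j) / dotv u (b j).
have h2 : \prod_(j < m) dotv w (b j) = lhat b u * \prod_(j < m) x j.
  rewrite /lhat -big_split; apply: eq_bigr => j _ /=; rewrite /x.
  by field; rewrite gt_eqF.
have x0 : forall j, 0 <= x j.
  move=> j; apply: divr_ge0; last exact: ltW (pu j).
  by apply: sumr_ge0 => i _; apply: mulr_ge0; [exact: normr_ge0 | exact: b0].
have h3 : \prod_(j < m) x j <= 1.
  apply: le_trans (AGM x0) _; apply: exprn_ile1.
    by apply: divr_ge0; [apply: sumr_ge0 => j _; exact: x0 | exact: ltW].
  have Ew : dotv w u = r / m%:R * \sum_(j < m) x j by exact: dot_sol w Hu.
  have ww : dotv w w = r.
    by rewrite -Hv; apply: eq_bigr => i _; rewrite /w -normrM -expr2 ger0_norm // sqr_ge0.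
  have cs : dotv w u <= r.
    have : 0 <= \sum_(i < n) (w i - u i) ^+ 2 by apply: sumr_ge0 => i _; apply: sqr_ge0.
    have -> : \sum_(i < n) (w i - u i) ^+ 2 = dotv w w + dotv u u - 2 * dotv w u.
      rewrite /dotv mulr_sumr -big_split -sumrB; apply: eq_bigr => i _ /=; ring.
    rewrite ww uu; lra.
  rewrite Ew in cs.
  rewrite ler_pdivrMr // mul1r.
  have cp : 0 < r / m%:R by rewrite divr_gt0.
  by rewrite -(ler_pM2l cp) divfK ?gt_eqF.
rewrite (le_trans h1) // h2 -[X in _ <= X]mulr1 ler_wpM2l //.
by apply: prodr_ge0 => j _; apply: ltW.
Qed.
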